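(* Let $\boldsymbol\lambda=\{\lambda_i\}_{i\in\mathbb N}$ be a nondecreasing real sequence, let $E$ be a symmetric operator on a dense domain $\mathcal D$ of a Hilbert space $\mathcal H$, and let $\{f_i\}_{i\in\mathbb N}\subset\mathcal D$ be an orthonormal sequence with $\langle Ef_i,f_i\rangle=\lambda_i$ for all $i$. Let $\mathbf d=\{d_i\}_{i\in\mathbb N}$ be a real sequence such that \[ \lambda_1\le d_n<\lambda_n\quad\text{for all }n\ge2,\qquad\text{and}\qquad d_1=\lambda_1+\sum_{i=2}^\infty(\lambda_i-d_i)<\lambda_2 . \] Then there exists an orthonormal sequence $\{e_i\}_{i\in\mathbb N}$, each element of which lies in the (algebraic) linear span of $\{f_i\}_{i\in\mathbb N}$, such that $\overline{\operatorname{span}}\{e_i\}=\overline{\operatorname{span}}\{f_i\}$ and $\langle Ee_i,e_i\rangle=d_i$ for all $i\in\mathbb N$.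
   Context: $E$ symmetric means $\langle Ef,g\rangle=\langle f,Eg\rangle$ for all $f,g\in\mathcal D$. The series $\sum_{i\ge2}(\lambda_i-d_i)$ of positive terms is implicitly assumed convergent, since it equals $d_1-\lambda_1$. $\overline{\operatorname{span}}$ is the closed linear span. *)

(* Defs.v *)
From HB Require Import structures.
From mathcomp Require Import all_boot all_order all_algebra.
From mathcomp Require Import all_classical all_reals topology normedtype sequences.
From mathcomp Require Import complex.
Set Implicit Arguments. Unset Strict Implicit. Unset Printing Implicit Defensive.
Import Order.TTheory GRing.Theory Num.Theory.
Local Open Scope ring_scope.

(* Complex Hilbert spaces, set up by hand: scalars are R[i] for R : realType.
   Natural-number indices of the paper (starting at 1) are shifted to start at 0. *)
Section Hilbert.
Variable R : realType.
Local Notation C := R[i].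
Variable V : lmodType C.

Definition is_inner_product (ip : V -> V -> C) : Prop :=
  [/\ (forall (a : C) (x y z : V), ip (a *: x + y) z = a * ip x z + ip y z),
      (forall x y : V, ip y x = (ip x y)^*),
      (forall x : V, 0 <= ip x x) &
      (forall x : V, ip x x = 0 -> x = 0)].

Definition hnorm (ip : V -> V -> C) (x : V) : C := sqrtC (ip x x).

Definition hcomplete (ip : V -> V -> C) : Prop :=
  forall u : nat -> V,
    (forall eps : R, 0 < eps -> exists N, forall m n, (N <= m)%N -> (N <= n)%N ->
        hnorm ip (u m - u n) < (eps%:C)%C) ->
    exists x, forall eps : R, 0 < eps -> exists N, forall n, (N <= n)%N ->
        hnorm ip (u n - x) < (eps%:C)%C.

Definition is_hilbert (ip : V -> V -> C) : Prop :=
  is_inner_product ip /\ hcomplete ip.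

Definition is_subspace (D : set V) : Prop :=
  D 0 /\ forall (a : C) x y, D x -> D y -> D (a *: x + y).

Definition dense_in (ip : V -> V -> C) (D : set V) : Prop :=
  forall x (eps : R), 0 < eps -> exists y, D y /\ hnorm ip (x - y) < (eps%:C)%C.

Definition linear_on (D : set V) (E : V -> V) : Prop :=
  forall (a : C) x y, D x -> D y -> E (a *: x + y) = a *: E x + E y.

Definition symmetric_on (ip : V -> V -> C) (D : set V) (E : V -> V) : Prop :=
  forall f g, D f -> D g -> ip (E f) g = ip f (E g).

Definition orthonormal_seq (ip : V -> V -> C) (f : nat -> V) : Prop :=
  forall i j, ip (f i) (f j) = if i == j then 1 else 0.

Definition in_span (f : nat -> V) (x : V) : Prop :=
  exists (n : nat) (c : nat -> C), x = \sum_(i < n) c i *: f i.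

Definition in_cspan (ip : V -> V -> C) (f : nat -> V) (x : V) : Prop :=
  forall eps : R, 0 < eps -> exists y, in_span f y /\ hnorm ip (x - y) < (eps%:C)%C.

End Hilbert.

(* Main.v *)
Require Import Defs.
From HB Require Import structures.
From mathcomp Require Import all_boot all_order all_algebra.
From mathcomp Require Import all_classical all_reals topology normedtype sequences.
From mathcomp Require Import complex.
From mathcomp Require Import ring lra zify.
Import Order.TTheory GRing.Theory Num.Theory numFieldNormedType.Exports.
Local Open Scope ring_scope.
Local Open Scope classical_set_scope.
Set Implicit Arguments. Unset Strict Implicit.

Lemma conjR (R : realType) (r : R) : ((r%:C)%C)^* = (r%:C)%C :> R[i].
Proof. rewrite conj_Creal //. apply/complex_realP; by exists r. Qed.

Lemma ip0l (R : realType) (V : lmodType R[i]) (ip : V -> V -> R[i]) :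
  is_inner_product ip -> forall z, ip 0 z = 0.
Proof.
case=> hl _ _ _ z; have := hl 1 0 0 z; rewrite scale1r addr0 mul1r.
by move/(congr1 (fun w => w - ip 0 z)); rewrite subrr addrK => /esym.
Qed.

Lemma ipDl (R : realType) (V : lmodType R[i]) (ip : V -> V -> R[i]) :
  is_inner_product ip -> forall x y z, ip (x + y) z = ip x z + ip y z.
Proof. by case=> hl _ _ _ x y z; rewrite -[x]scale1r hl mul1r scale1r. Qed.

Lemma ipZl (R : realType) (V : lmodType R[i]) (ip : V -> V -> R[i]) :
  is_inner_product ip -> forall a x z, ip (a *: x) z = a * ip x z.
Proof.
move=> h a x z; case: (h) => hl _ _ _.
by rewrite -[a *: x]addr0 hl (ip0l h) addr0.
Qed.

Lemma ipDr (R : realType) (V : lmodType R[i]) (ip : V -> V -> R[i]) :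
  is_inner_product ip -> forall x y z, ip z (x + y) = ip z x + ip z y.
Proof.
move=> h x y z; case: (h) => _ hs _ _.
by rewrite (hs (x+y) z) (ipDl h) rmorphD /= -(hs x z) -(hs y z).
Qed.

Lemma ipZr (R : realType) (V : lmodType R[i]) (ip : V -> V -> R[i]) :
  is_inner_product ip -> forall a x z, ip z (a *: x) = a^* * ip z x.
Proof.
move=> h a x z; case: (h) => _ hs _ _.
by rewrite (hs (a *: x) z) (ipZl h) rmorphM /= -(hs x z).
Qed.

Lemma ip0r (R : realType) (V : lmodType R[i]) (ip : V -> V -> R[i]) :
  is_inner_product ip -> forall z, ip z 0 = 0.
Proof. move=> h z; case: (h) => _ hs _ _; by rewrite hs (ip0l h) conjC0. Qed.

Lemma ipNl (R : realType) (V : lmodType R[i]) (ip : V -> V -> R[i]) :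
  is_inner_product ip -> forall x z, ip (- x) z = - ip x z.
Proof. by move=> h x z; rewrite -scaleN1r (ipZl h) mulN1r. Qed.

Lemma ipNr (R : realType) (V : lmodType R[i]) (ip : V -> V -> R[i]) :
  is_inner_product ip -> forall x z, ip z (- x) = - ip z x.
Proof. by move=> h x z; rewrite -scaleN1r (ipZr h) rmorphN rmorph1 mulN1r. Qed.

Lemma ip_suml (R : realType) (V : lmodType R[i]) (ip : V -> V -> R[i]) :
  is_inner_product ip -> forall n (c : nat -> R[i]) (f : nat -> V) z,
  ip (\sum_(i < n) c i *: f i) z = \sum_(i < n) c i * ip (f i) z.
Proof.
move=> h; elim=> [|n IH] c f z; first by rewrite !big_ord0 (ip0l h).
by rewrite !big_ord_recr /= (ipDl h) IH (ipZl h).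
Qed.

Lemma ip_sumr (R : realType) (V : lmodType R[i]) (ip : V -> V -> R[i]) :
  is_inner_product ip -> forall n (c : nat -> R[i]) (f : nat -> V) z,
  ip z (\sum_(i < n) c i *: f i) = \sum_(i < n) (c i)^* * ip z (f i).
Proof.
move=> h; elim=> [|n IH] c f z; first by rewrite !big_ord0 (ip0r h).
by rewrite !big_ord_recr /= (ipDr h) IH (ipZr h).
Qed.

Lemma ip2 (R : realType) (V : lmodType R[i]) (ip : V -> V -> R[i]) :
  is_inner_product ip -> forall a b a' b' x y x' y',
  ip (a *: x + b *: y) (a' *: x' + b' *: y') =
  a * a'^* * ip x x' + a * b'^* * ip x y' + b * a'^* * ip y x' + b * b'^* * ip y y'.
Proof.
move=> h a b a' b' x y x' y'.
rewrite !(ipDl h) !(ipDr h) !(ipZl h) !(ipZr h); ring.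
Qed.

Lemma E0 (R : realType) (V : lmodType R[i]) (D : set V) (E : V -> V) :
  is_subspace D -> linear_on D E -> E 0 = 0.
Proof.
case=> D0 _ hE; have := hE 1 0 0 D0 D0; rewrite !scale1r addr0.
by move/(congr1 (fun w => w - E 0)); rewrite subrr addrK => /esym.
Qed.

Lemma E2 (R : realType) (V : lmodType R[i]) (D : set V) (E : V -> V) :
  is_subspace D -> linear_on D E -> forall a b x y, D x -> D y ->
  E (a *: x + b *: y) = a *: E x + b *: E y /\ D (a *: x + b *: y).
Proof.
move=> hD hE a b x y Dx Dy; case: (hD) => D0 DD.
have Dby : D (b *: y) by rewrite -[b *: y]addr0; apply: DD.
split; last exact: DD.
rewrite hE //; congr (_ + _); rewrite -[b *: y]addr0 hE // (E0 hD hE) addr0 //.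
Qed.

Definition phase (R : realType) (z : R[i]) : R[i] :=
  if z == 0 then 1 else 'i * z^* / `|z|.

Lemma phase_neq0 (R : realType) (z : R[i]) : phase z != 0.
Proof.
rewrite /phase; case: (z =P 0) => [_|/eqP z0]; first exact: oner_neq0.
by rewrite !mulf_neq0 ?invr_eq0 ?normr_eq0 ?conjC_eq0 ?neq0Ci.
Qed.

Lemma phase_unit (R : realType) (z : R[i]) : phase z * (phase z)^* = 1.
Proof.
rewrite /phase; case: eqP => [_|/eqP z0]; first by rewrite rmorph1 mulr1.
have nz : `|z| != 0 by rewrite normr_eq0.
rewrite !rmorphM /= fmorphV /= conj_normC conjCi conjCK.
have h2 : `|z| ^+ 2 = z * z^* := normCK z.
have hi : 'i * 'i = -1 :> R[i] by rewrite -expr2 sqrCi.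
transitivity (- ('i * 'i) * (z * z^*) / (`|z| ^+ 2)); first by field.
by rewrite hi opprK mul1r -h2 divff // expf_neq0.
Qed.

Lemma phase_cross (R : realType) (z : R[i]) : phase z * z + (phase z * z)^* = 0.
Proof.
rewrite /phase; case: eqP => [->|/eqP z0]; first by rewrite mulr0 rmorph0 addr0.
have nz : `|z| != 0 by rewrite normr_eq0.
have h2 : z^* * z = `|z| ^+ 2 by rewrite normCKC.
have -> : 'i * z^* / `|z| * z = 'i * `|z|.
  transitivity ('i * (z^* * z) / `|z|); first by field.
  by rewrite h2 expr2 mulrA mulfK.
by rewrite rmorphM /= conj_normC conjCi mulNr subrr.
Qed.

Definition cc (R : realType) (a l d : R) := Num.sqrt ((l - d) / (l - a)).
Definition ss (R : realType) (a l d : R) := Num.sqrt ((d - a) / (l - a)).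

Definition mk_e (R : realType) (V : lmodType R[i]) (ip : V -> V -> R[i]) (E : V -> V)
  (u v : V) (a l d : R) : V :=
  ((cc a l d)%:C)%C *: u + (((ss a l d)%:C)%C * phase (ip (E v) u)) *: v.
Definition mk_g (R : realType) (V : lmodType R[i]) (ip : V -> V -> R[i]) (E : V -> V)
  (u v : V) (a l d : R) : V :=
  ((- ss a l d)%:C)%C *: u + (((cc a l d)%:C)%C * phase (ip (E v) u)) *: v.

Lemma cs_facts (R : realType) (a l d : R) : a <= d -> d < l ->
  [/\ cc a l d ^+ 2 = (l - d) / (l - a), ss a l d ^+ 2 = (d - a) / (l - a),
      0 <= cc a l d, 0 <= ss a l d & cc a l d ^+ 2 + ss a l d ^+ 2 = 1].
Proof.
move=> ad dl; have la : 0 < l - a by rewrite subr_gt0; apply: le_lt_trans dl.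
have h1 : cc a l d ^+ 2 = (l - d) / (l - a).
  by rewrite /cc sqr_sqrtr // divr_ge0 ?(ltW la) // subr_ge0 ltW.
have h2 : ss a l d ^+ 2 = (d - a) / (l - a).
  by rewrite /ss sqr_sqrtr // divr_ge0 ?(ltW la) // subr_ge0.
split => //; rewrite ?sqrtr_ge0 // h1 h2.
have ne : l - a != 0 by rewrite gt_eqF.
by field.
Qed.

Lemma lin2 (R : realType) (V : lmodType R[i]) (a b p q p' q' : R[i]) (u v : V) :
  a *: (p *: u + q *: v) + b *: (p' *: u + q' *: v) =
  (a * p + b * p') *: u + (a * q + b * q') *: v.
Proof. by rewrite !scalerDr !scalerA !scalerDl addrACA. Qed.

Lemma two_d (R : realType) (V : lmodType R[i]) (ip : V -> V -> R[i])
  (D : set V) (E : V -> V) (u v : V) (a l d : R) :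
  is_inner_product ip -> is_subspace D -> linear_on D E -> symmetric_on ip D E ->
  D u -> D v -> ip u u = 1 -> ip v v = 1 -> ip u v = 0 ->
  ip (E u) u = (a%:C)%C -> ip (E v) v = (l%:C)%C -> a <= d -> d < l ->
  let e := mk_e ip E u v a l d in let g := mk_g ip E u v a l d in
  let w := phase (ip (E v) u) in
  [/\ D e, D g, ip e e = 1, ip g g = 1 & ip e g = 0] /\
  [/\ ip (E e) e = (d%:C)%C, ip (E g) g = ((a + l - d)%:C)%C,
      u = ((cc a l d)%:C)%C *: e + ((- ss a l d)%:C)%C *: g &
      v = (w^* * ((ss a l d)%:C)%C) *: e + (w^* * ((cc a l d)%:C)%C) *: g].
Proof.
move=> hip hD hE hS Du Dv uu vv uv Eu Ev ad dl e g w.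
have [c2 s2 c0 s0 cs] := cs_facts ad dl.
set c := cc a l d; set s := ss a l d.
have la : l - a != 0 by rewrite gt_eqF // subr_gt0; apply: le_lt_trans dl.
have ww : w * w^* = 1 by exact: phase_unit.
have w0 : w != 0 by exact: phase_neq0.
have wc : w^* = w^-1 by apply: (mulfI w0); rewrite ww divff.
have csC : (c%:C)%C * (c%:C)%C + (s%:C)%C * (s%:C)%C = 1 :> R[i].
  by rewrite -!rmorphM -rmorphD /= -!expr2 cs.
have vu : ip v u = 0 by case: hip => _ hs _ _; rewrite hs uv rmorph0.
have cross := phase_cross (ip (E v) u); rewrite -/w in cross.
have Euv : ip (E u) v = (ip (E v) u)^*.
  by case: hip => _ hs _ _; rewrite hS // hs.
have [Ee De] := E2 hD hE (c%:C)%C ((s%:C)%C * w) Du Dv.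
have [Eg Dg] := E2 hD hE ((- s)%:C)%C ((c%:C)%C * w) Du Dv.
rewrite /e /g /mk_e /mk_g -/c -/s -/w.
split; split => //.
- rewrite (ip2 hip) uu vv uv vu !rmorphM /= !conjR wc.
  transitivity ((c%:C)%C * (c%:C)%C + (s%:C)%C * (s%:C)%C)%C => //; by field.
- rewrite (ip2 hip) uu vv uv vu !rmorphM /= !conjR wc rmorphN.
  transitivity ((c%:C)%C * (c%:C)%C + (s%:C)%C * (s%:C)%C)%C => //; by field.
- rewrite (ip2 hip) uu vv uv vu !rmorphM /= !conjR wc rmorphN.
  by field.
- rewrite Ee (ip2 hip) Eu Ev Euv !rmorphM /= !conjR.
  set z := ip (E v) u.
  have -> : forall A B C0 D0 : R[i], A + B + C0 + D0 = A + D0 + (B + C0) by move=> *; ring.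
  have -> : (c%:C)%C * ((s%:C)%C * w^*) * z^* + (s%:C)%C * w * (c%:C)%C * z
     = (c%:C)%C * (s%:C)%C * (w * z + (w * z)^*) by rewrite rmorphM /=; ring.
  rewrite cross mulr0 addr0 wc.
  transitivity ((c * c * a + s * s * l)%:C)%C; first by rewrite rmorphD !rmorphM /=; field.
  congr ((_ %:C)%C); rewrite -!expr2 c2 s2; field; exact: la.
- rewrite Eg (ip2 hip) Eu Ev Euv !rmorphM /= !conjR.
  set z := ip (E v) u.
  have -> : forall A B C0 D0 : R[i], A + B + C0 + D0 = A + D0 + (B + C0) by move=> *; ring.
  have -> : ((- s)%:C)%C * ((c%:C)%C * w^*) * z^* + (c%:C)%C * w * ((-s)%:C)%C * z
     = ((- s)%:C)%C * (c%:C)%C * (w * z + (w * z)^*) by rewrite rmorphM /=; ring.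
  rewrite cross mulr0 addr0 wc.
  transitivity ((s * s * a + c * c * l)%:C)%C; first by rewrite rmorphD !rmorphM rmorphN /=; field.
  congr ((_ %:C)%C); rewrite -!expr2 c2 s2; field; exact: la.
- rewrite lin2.
  have -> : (c%:C)%C * (c%:C)%C + ((- s)%:C)%C * ((- s)%:C)%C = 1.
    by rewrite rmorphN /= mulrNN.
  have -> : (c%:C)%C * ((s%:C)%C * w) + ((- s)%:C)%C * ((c%:C)%C * w) = 0.
    by rewrite rmorphN /=; ring.
  by rewrite scale1r scale0r addr0.
- rewrite lin2.
  have -> : w^* * (s%:C)%C * (c%:C)%C + w^* * (c%:C)%C * ((- s)%:C)%C = 0.
    by rewrite rmorphN /=; ring.
  have -> : w^* * (s%:C)%C * ((s%:C)%C * w) + w^* * (c%:C)%C * ((c%:C)%C * w) = 1.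
    rewrite wc; transitivity ((c%:C)%C * (c%:C)%C + (s%:C)%C * (s%:C)%C)%C => //.
    by field.
  by rewrite scale1r scale0r add0r.
Qed.

Lemma sqrtC_lt (R : realType) (P : R[i]) (e : R) : 0 <= P -> 0 <= e ->
  (sqrtC P < (e%:C)%C) = (P < ((e%:C)%C) ^+ 2).
Proof.
move=> hP he; rewrite -[X in _ < X](@sqrCK _ (e%:C)%C) ?lecR // ltr_sqrtC // ?nnegrE ?exprn_ge0 ?lecR //.
Qed.

Lemma tri (R : realType) (V : lmodType R[i]) (ip : V -> V -> R[i]) (x g : V)
  (G : R[i]) (e1 e2 : R) : is_inner_product ip -> ip g g = 1 -> 0 < e1 -> 0 < e2 ->
  hnorm ip x < (e1%:C)%C -> G * G^* < ((e2%:C)%C) ^+ 2 ->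
  hnorm ip (x + G *: g) < ((e1 + e2)%:C)%C.
Proof.
move=> hip gg e10 e20; case: (hip) => _ hs hpos _.
rewrite /hnorm !sqrtC_lt ?hpos ?addr_ge0 ?ltW // => hP hG.
set E1 := (e1%:C)%C in hP *; set E2 := (e2%:C)%C in hG *.
set P := ip x x in hP *; set q := ip x g.
have hB : q * q^* <= P.
  have := hpos (1 *: x + (- q) *: g); rewrite (ip2 hip) gg -/P -/q (hs x g) -/q.
  rewrite rmorph1 rmorphN !mul1r mulr1; move=> h; rewrite -subr_ge0.
  by move: h; congr (_ <= _); ring.
set A := (((e1 / e2)%:C)%C : R[i]).
have A0 : 0 < A by rewrite ltcR divr_gt0.
have Ac : A^* = A by rewrite conjR.
have h0 := mul_conjC_ge0 (A * G - q).
rewrite -[x + G *: g]scale1r -[in X in X + _](scale1r x) !scalerDr !scalerA !mulr1.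
rewrite (ip2 hip) gg -/P -/q (hs x g) -/q rmorph1 !mul1r !mulr1.
set T := P + _ + _ + _.
have h1 : A * T <= (A + 1) * P + (A * A + A) * (G * G^*).
  rewrite -subr_ge0.
  have -> : (A + 1) * P + (A * A + A) * (G * G^*) - A * T =
    (A * G - q) * (A * G - q)^* + (P - q * q^*).
    rewrite rmorphB rmorphM /= Ac /T; ring.
  by rewrite addr_ge0 // subr_ge0.
have h2 : (A + 1) * P + (A * A + A) * (G * G^*) < (A + 1) * E1 ^+ 2 + (A * A + A) * E2 ^+ 2.
  rewrite ltrD // ltr_pM2l //; first by rewrite addr_gt0 // ltr01.
  by rewrite addr_gt0 // mulr_gt0.
have h3 : (A + 1) * E1 ^+ 2 + (A * A + A) * E2 ^+ 2 = A * (((e1 + e2)%:C)%C) ^+ 2.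
  rewrite /A /E1 /E2 !rmorphD !rmorphM /= fmorphV /=.
  have : ((e2%:C)%C : R[i]) != 0 by rewrite gt_eqF // ltcR.
  move=> ne; field => //.
by rewrite -(ltr_pM2l A0) -h3; apply: le_lt_trans h2.
Qed.

Lemma span_widen (R : realType) (V : lmodType R[i]) (f : nat -> V) (x : V) (m M : nat) :
  (m <= M)%N -> (exists b : nat -> R[i], x = \sum_(i < m) b i *: f i) ->
  exists b : nat -> R[i], x = \sum_(i < M) b i *: f i.
Proof.
move=> mM [b ->]; exists (fun i => if (i < m)%N then b i else 0).
rewrite (big_ord_widen M (fun i => b i *: f i)) // big_mkcond /=.
by apply: eq_bigr => i _; case: ifP => //; rewrite scale0r.
Qed.

Lemma span_comb (R : realType) (V : lmodType R[i]) (g x : nat -> V) (n m : nat) :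
  (forall i, (i < n)%N -> exists b : nat -> R[i], x i = \sum_(j < m) b j *: g j) ->
  forall c : nat -> R[i], exists b : nat -> R[i],
    \sum_(i < n) c i *: x i = \sum_(j < m) b j *: g j.
Proof.
elim: n => [|n IH] hx c.
  by exists (fun _ => 0); rewrite big_ord0; apply/esym/big1 => i _; rewrite scale0r.
have [b hb] := IH (fun i hi => hx i (ltnW hi)) c.
have [b' hb'] := hx n (ltnSn n).
exists (fun j => b j + c n * b' j).
rewrite big_ord_recr /= hb hb' scaler_sumr -big_split /=.
by apply: eq_bigr => j _; rewrite scalerDl scalerA.
Qed.

Lemma ortho_span (R : realType) (V : lmodType R[i]) (ip : V -> V -> R[i]) (f : nat -> V)
  (x : V) (k m : nat) : is_inner_product ip -> orthonormal_seq ip f -> (k <= m)%N ->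
  (exists b : nat -> R[i], x = \sum_(i < k) b i *: f i) ->
  ip x (f m) = 0 /\ ip (f m) x = 0.
Proof.
move=> hip hf km [b ->]; split.
  rewrite (ip_suml hip); apply: big1 => i _; rewrite hf.
  by case: eqP => [ei|]; [move: (ltn_ord i); rewrite ei ltnNge km | rewrite mulr0].
rewrite (ip_sumr hip); apply: big1 => i _; rewrite hf.
by case: eqP => [ei|]; [move: (ltn_ord i); rewrite -ei ltnNge km | rewrite mulr0].
Qed.

Lemma lim_facts (R : realType) (S : nat -> R) (L : R) :
  {homo S : m n / (m <= n)%N >-> m <= n} ->
  (S : R^nat) @ \oo --> L ->
  (forall n, S n <= L) /\ (forall eps : R, 0 < eps -> exists N, forall n, (N <= n)%N -> L - S n < eps).
Proof.
move=> hS hc; split.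
  move=> n; rewrite -(cvg_lim _ hc) //; apply: nondecreasing_cvgn_le => //.
  by apply/cvg_ex; exists L.
move=> eps he; move/cvgrPdist_lt: hc => /(_ eps he) [N _ HN].
exists N => n /HN /=; apply: le_lt_trans; exact: ler_norm.
Qed.

Definition Ssum (R : realType) (lam d : nat -> R) (n : nat) : R :=
  \sum_(1 <= i < n.+1) (lam i - d i).
Definition tt (R : realType) (lam d : nat -> R) (n : nat) : R :=
  (d 0%N - lam 0%N) - Ssum lam d n.
Definition beta (R : realType) (lam d : nat -> R) (n : nat) : R := d n - tt lam d n.

Lemma tS (R : realType) (lam d : nat -> R) n :
  tt lam d n.+1 = tt lam d n - (lam n.+1 - d n.+1).
Proof. by rewrite /tt /Ssum big_nat_recr //= opprD addrA. Qed.

Lemma t0 (R : realType) (lam d : nat -> R) : tt lam d 0 = d 0%N - lam 0%N.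
Proof. by rewrite /tt /Ssum big_geq // subr0. Qed.

Lemma betaS (R : realType) (lam d : nat -> R) n :
  beta lam d n.+1 = beta lam d n + lam n.+1 - d n.
Proof. rewrite /beta tS; ring. Qed.

Lemma tfacts (R : realType) (lam d : nat -> R) :
  {homo lam : m n / (m <= n)%N >-> m <= n} ->
  (forall n, (1 <= n)%N -> lam 0%N <= d n < lam n) ->
  ([sequence \sum_(1 <= i < n.+1) (lam i - d i)]_n : R^nat) @ \oo --> (d 0%N - lam 0%N : R) ->
  d 0%N < lam 1%N ->
  [/\ (forall n, 0 < tt lam d n),
      (forall m n, (m <= n)%N -> tt lam d n <= tt lam d m),
      (forall eps : R, 0 < eps -> exists N, forall n, (N <= n)%N -> tt lam d n < eps),
      (forall n, beta lam d n <= d n /\ d n < lam n.+1) &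
      (forall n, ss (beta lam d n) (lam n.+1) (d n) ^+ 2 * tt lam d n.-1 <= tt lam d n)].
Proof.
move=> hl hd hc hd0.
have hpos : forall n, (1 <= n)%N -> 0 < lam n - d n.
  by move=> n /hd /andP [_]; rewrite subr_gt0.
have hS : {homo Ssum lam d : m n / (m <= n)%N >-> m <= n}.
  apply/nondecreasing_seqP => n; rewrite /Ssum [X in _ <= X]big_nat_recr //= lerDl ltW //.
  exact: hpos.
have [hle hev] := lim_facts hS hc.
have tge0 : forall n, 0 <= tt lam d n by move=> n; rewrite /tt subr_ge0.
have tgt0 : forall n, 0 < tt lam d n.
  move=> n; have := tS lam d n; move/(congr1 (fun w => w + (lam n.+1 - d n.+1))).
  rewrite subrK => <-; rewrite ltr_wpDl //; exact: hpos.
have hdl : forall n, d n < lam n.+1.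
  case=> // n; have /andP [_ h] := hd n.+1 isT.
  apply: lt_le_trans h _; exact: hl.
split => //.
- move=> m n mn; rewrite /tt lerB // hS //.
- by move=> n; split => //; rewrite /beta; have := tge0 n; lra.
- move=> n; have bd : beta lam d n <= d n by rewrite /beta; have := tge0 n; lra.
  have [_ s2 _ _ _] := cs_facts bd (hdl n); rewrite s2.
  have hQ : 0 < lam n.+1 - beta lam d n by rewrite subr_gt0; apply: le_lt_trans (hdl n).
  have htQ : tt lam d n.-1 <= lam n.+1 - beta lam d n.
    rewrite /beta; case: n {bd s2 hQ} => [|m] /=; first by have := hd0; lra.
    rewrite (tS lam d m); have := hl m.+1 m.+2 (leqnSn _); lra.
  apply: (le_trans (ler_wpM2l _ htQ)); first by apply: divr_ge0; [rewrite subr_ge0 | exact: ltW].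
  by rewrite divfK ?gt_eqF // /beta opprB addrC subrK.
Qed.

Fixpoint GG (R : realType) (V : lmodType R[i]) (ip : V -> V -> R[i]) (E : V -> V)
  (lam d : nat -> R) (f : nat -> V) (n : nat) {struct n} : V :=
  match n with
  | 0 => f 0%N
  | m.+1 => mk_g ip E (GG ip E lam d f m) (f m.+1) (beta lam d m) (lam m.+1) (d m)
  end.

Definition ee (R : realType) (V : lmodType R[i]) (ip : V -> V -> R[i]) (E : V -> V)
  (lam d : nat -> R) (f : nat -> V) (n : nat) : V :=
  mk_e ip E (GG ip E lam d f n) (f n.+1) (beta lam d n) (lam n.+1) (d n).

Lemma step_facts (R : realType) (V : lmodType R[i]) (ip : V -> V -> R[i])
  (D : set V) (E : V -> V) (lam d : nat -> R) (f : nat -> V) (n : nat) :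
  is_inner_product ip -> is_subspace D -> linear_on D E -> symmetric_on ip D E ->
  (forall i, D (f i)) -> orthonormal_seq ip f ->
  (forall i, ip (E (f i)) (f i) = ((lam i)%:C)%C) ->
  (forall n, beta lam d n <= d n /\ d n < lam n.+1) ->
  let u := GG ip E lam d f n in
  D u -> ip u u = 1 -> ip (E u) u = ((beta lam d n)%:C)%C ->
  (exists b : nat -> R[i], u = \sum_(i < n.+1) b i *: f i) ->
  let e := ee ip E lam d f n in let g := GG ip E lam d f n.+1 in
  let w := phase (ip (E (f n.+1)) u) in
  let c := cc (beta lam d n) (lam n.+1) (d n) in
  let s := ss (beta lam d n) (lam n.+1) (d n) in
  [/\ D e, D g, ip e e = 1, ip g g = 1 & ip e g = 0] /\
  [/\ ip (E e) e = ((d n)%:C)%C, ip (E g) g = ((beta lam d n.+1)%:C)%C,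
      u = ((c)%:C)%C *: e + ((- s)%:C)%C *: g &
      f n.+1 = (w^* * ((s)%:C)%C) *: e + (w^* * ((c)%:C)%C) *: g].
Proof.
move=> hip hD hE hS hfD hon hval hbd u Du uu Eu hsp e g w c s.
have [bd dl] := hbd n.
have uv : ip u (f n.+1) = 0 by case: (ortho_span hip hon (leqnn n.+1) hsp).
have vv : ip (f n.+1) (f n.+1) = 1 by rewrite hon eqxx.
have := two_d hip hD hE hS Du (hfD n.+1) uu vv uv Eu (hval n.+1) bd dl.
by rewrite betaS.
Qed.

Lemma span_step (R : realType) (V : lmodType R[i]) (f : nat -> V) (u : V) (n : nat) :
  (exists b : nat -> R[i], u = \sum_(i < n.+1) b i *: f i) ->
  forall al be : R[i], exists b : nat -> R[i],
    al *: u + be *: f n.+1 = \sum_(i < n.+2) b i *: f i.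
Proof.
move=> [b ->] al be; exists (fun i => if i == n.+1 then be else al * b i).
rewrite [RHS]big_ord_recr /= eqxx scaler_sumr; congr (_ + _).
by apply: eq_bigr => i _; rewrite ltn_eqF // scalerA.
Qed.

Lemma sum_ext (R : realType) (V : lmodType R[i]) (x : nat -> V) (a : nat -> R[i])
  (n : nat) (z : R[i]) :
  \sum_(j < n) a j *: x j + z *: x n =
  \sum_(j < n.+1) (if (j : nat) == n then z else a j) *: x j.
Proof.
rewrite [RHS]big_ord_recr /= eqxx; congr (_ + _).
by apply: eq_bigr => j _; rewrite ltn_eqF.
Qed.

Lemma inv (R : realType) (V : lmodType R[i]) (ip : V -> V -> R[i])
  (D : set V) (E : V -> V) (lam d : nat -> R) (f : nat -> V) :
  is_inner_product ip -> is_subspace D -> linear_on D E -> symmetric_on ip D E ->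
  (forall i, D (f i)) -> orthonormal_seq ip f ->
  (forall i, ip (E (f i)) (f i) = ((lam i)%:C)%C) ->
  (forall n, beta lam d n <= d n /\ d n < lam n.+1) ->
  (forall n, 0 < tt lam d n) ->
  (forall n, ss (beta lam d n) (lam n.+1) (d n) ^+ 2 * tt lam d n.-1 <= tt lam d n) ->
  forall n, let u := GG ip E lam d f n in
  [/\ D u, ip u u = 1, ip (E u) u = ((beta lam d n)%:C)%C,
      (exists b : nat -> R[i], u = \sum_(i < n.+1) b i *: f i) &
      (forall j, (j < n)%N -> ip (ee ip E lam d f j) u = 0 /\
          exists b : nat -> R[i], ee ip E lam d f j = \sum_(i < j.+2) b i *: f i)] /\
  (forall k, (k <= n)%N -> exists (a : nat -> R[i]) (ga : R[i]) (r : R),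
     f k = \sum_(j < n) a j *: ee ip E lam d f j + ga *: u /\
     ga * ga^* = (r%:C)%C /\ 0 <= r /\ r * tt lam d k.-1 <= tt lam d n.-1).
Proof.
move=> hip hD hE hS hfD hon hval hbd htp hsb.
elim=> [|n [[Du uu Eu hsp hej] hf]].
  split; first split => //=.
  - by rewrite hval /beta t0; congr ((_ %:C)%C); ring.
  - by exists (fun _ => 1); rewrite big_ord1 scale1r.
  move=> k; rewrite leqn0 => /eqP ->; exists (fun _ => 0), 1, 1.
  rewrite big_ord0 add0r scale1r rmorph1 mulr1 mul1r; do !split => //.
have [[De Dg ee1 gg1 eg0] [Ee Eg hu hv]] :=
  step_facts hip hD hE hS hfD hon hval hbd Du uu Eu hsp.
have [bd dl] := hbd n.
have [c2 s2 c0 s0 cs] := cs_facts bd dl.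
set c := cc (beta lam d n) (lam n.+1) (d n) in c2 c0 cs hu hv *.
set s := ss (beta lam d n) (lam n.+1) (d n) in s2 s0 cs hu hv *.
set w := phase (ip (E (f n.+1)) (GG ip E lam d f n)) in hu hv *.
have spe : exists b : nat -> R[i], ee ip E lam d f n = \sum_(i < n.+2) b i *: f i.
  exact: span_step hsp _ _.
split; first split => //.
- exact: span_step hsp _ _.
- move=> j; rewrite ltnS leq_eqVlt => /orP [/eqP -> | jn]; first by split.
  have [h0 [b hb]] := hej j jn; split; last by exists b.
  rewrite /= /mk_g (ipDr hip) !(ipZr hip) h0 mulr0 add0r.
  have [-> _] := ortho_span hip hon (jn : (j.+2 <= n.+1)%N) (ex_intro _ b hb).
  by rewrite mulr0.
set G1 := GG ip E lam d f n.+1 in hu hv *.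
move=> k; rewrite leq_eqVlt => /orP [/eqP -> | kn].
  exists (fun j => if j == n then w^* * (s%:C)%C else 0), (w^* * (c%:C)%C), (c * c).
  split; first by rewrite {1}hv big_ord_recr /= eqxx big1 ?add0r // => j _; rewrite ltn_eqF // scale0r.
  split; first by rewrite rmorphM /= conjCK conjR rmorphM /= mulrACA [w^* * w]mulrC phase_unit mul1r.
  split; first exact: mulr_ge0.
  rewrite /= -expr2; have := sqr_ge0 s; have := htp n; nra.
have [a [ga [r [hfk [hg [hr hrt]]]]]] := hf k kn.
exists (fun j => if j == n then ga * (c%:C)%C else a j), (ga * ((- s)%:C)%C), (s * s * r).
split; first by rewrite hfk {1}hu scalerDr !scalerA addrA sum_ext.
split; first by rewrite rmorphM /= conjR mulrACA hg -!rmorphM /= mulrNN mulrC.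
split; first by rewrite mulr_ge0 // mulr_ge0.
apply: (le_trans _ (hsb n)).
have -> : s * s * r * tt lam d k.-1 = (s * s) * (r * tt lam d k.-1) by ring.
rewrite expr2; apply: ler_wpM2l; first exact: mulr_ge0.
exact: hrt.
Qed.

Lemma ee_facts (R : realType) (V : lmodType R[i]) (ip : V -> V -> R[i])
  (D : set V) (E : V -> V) (lam d : nat -> R) (f : nat -> V) :
  is_inner_product ip -> is_subspace D -> linear_on D E -> symmetric_on ip D E ->
  (forall i, D (f i)) -> orthonormal_seq ip f ->
  (forall i, ip (E (f i)) (f i) = ((lam i)%:C)%C) ->
  (forall n, beta lam d n <= d n /\ d n < lam n.+1) ->
  (forall n, 0 < tt lam d n) ->
  (forall n, ss (beta lam d n) (lam n.+1) (d n) ^+ 2 * tt lam d n.-1 <= tt lam d n) ->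
  (forall n, [/\ ip (ee ip E lam d f n) (ee ip E lam d f n) = 1,
     ip (E (ee ip E lam d f n)) (ee ip E lam d f n) = ((d n)%:C)%C &
     exists b : nat -> R[i], ee ip E lam d f n = \sum_(i < n.+2) b i *: f i]) /\
  orthonormal_seq ip (ee ip E lam d f).
Proof.
move=> hip hD hE hS hfD hon hval hbd htp hsb.
have I := inv hip hD hE hS hfD hon hval hbd htp hsb.
have hn : forall n, [/\ ip (ee ip E lam d f n) (ee ip E lam d f n) = 1,
     ip (E (ee ip E lam d f n)) (ee ip E lam d f n) = ((d n)%:C)%C &
     exists b : nat -> R[i], ee ip E lam d f n = \sum_(i < n.+2) b i *: f i].
  move=> n; have [[Du uu Eu hsp _] _] := I n.
  have [[_ _ ee1 _ _] [Ee _ _ _]] := step_facts hip hD hE hS hfD hon hval hbd Du uu Eu hsp.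
  split => //; exact: span_step hsp _ _.
split => //.
have hlt : forall i j, (i < j)%N -> ip (ee ip E lam d f i) (ee ip E lam d f j) = 0.
  move=> i j ij; have [[_ _ _ _ hej] _] := I j; have [h0 hb] := hej i ij.
  rewrite [ee _ _ _ _ _ j]/ee /mk_e (ipDr hip) !(ipZr hip) h0 mulr0 add0r.
  by have [-> _] := ortho_span hip hon (ij : (i.+2 <= j.+1)%N) hb; rewrite mulr0.
move=> i j; case: (ltngtP i j) => [ij|ji|->]; last by case: (hn j).
  by rewrite hlt.
case: hip => _ hs _ _; by rewrite hs hlt // conjC0.
Qed.

Lemma comb (R : realType) (V : lmodType R[i]) (f e : nat -> V) (G : V) (n N : nat) (be : R[i]) :
  (forall k, (k < N)%N -> exists (a : nat -> R[i]) (ga : R[i]),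
     f k = \sum_(j < n) a j *: e j + ga *: G /\ `|ga| <= be) ->
  forall c : nat -> R[i], exists (a : nat -> R[i]) (Ga : R[i]),
     \sum_(i < N) c i *: f i = \sum_(j < n) a j *: e j + Ga *: G /\
     `|Ga| <= (\sum_(i < N) `|c i|) * be.
Proof.
elim: N => [|N IH] H c.
  exists (fun _ => 0), 0; rewrite !big_ord0 normr0 mul0r; split => //.
  by rewrite big1 ?scale0r ?addr0 // => j _; rewrite scale0r.
have [a [Ga [hs hG]]] := IH (fun k hk => H k (ltnW hk)) c.
have [a' [ga [hf hg]]] := H N (ltnSn N).
exists (fun j => a j + c N * a' j), (Ga + c N * ga); split.
  rewrite big_ord_recr /= hs hf scalerDr scaler_sumr addrACA -big_split /= scalerA scalerDl.
  by congr (_ + _); apply: eq_bigr => j _; rewrite scalerDl scalerA.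
rewrite big_ord_recr /= mulrDl; apply: (le_trans (ler_normD _ _)); apply: lerD => //.
rewrite normrM; apply: ler_wpM2l => //.
Qed.

Unset Implicit Arguments.

Theorem lemma3p3 (R : realType) (V : lmodType R[i]) (ip : V -> V -> R[i])
  (D : set V) (E : V -> V) (lam d : nat -> R) (f : nat -> V) :
  is_hilbert ip ->
  is_subspace D -> dense_in ip D ->
  linear_on D E -> symmetric_on ip D E ->
  {homo lam : m n / (m <= n)%N >-> m <= n} ->
  (forall i, D (f i)) -> orthonormal_seq ip f ->
  (forall i, ip (E (f i)) (f i) = ((lam i)%:C)%C) ->
  (forall n, (1 <= n)%N -> lam 0%N <= d n < lam n) ->
  ([sequence \sum_(1 <= i < n.+1) (lam i - d i)]_n : R^nat) @ \oo --> (d 0%N - lam 0%N : R) ->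
  d 0%N < lam 1%N ->
  exists e : nat -> V,
    [/\ orthonormal_seq ip e,
        (forall i, in_span f (e i)),
        (forall x, in_cspan ip e x <-> in_cspan ip f x) &
        (forall i, ip (E (e i)) (e i) = ((d i)%:C)%C)].
Proof.
move=> [hip _] hD _ hE hS hmono hfD hon hval hd hc hd0.
have [htp htm hev hbd hsb] := tfacts hmono hd hc hd0.
have [hn hone] := ee_facts hip hD hE hS hfD hon hval hbd htp hsb.
have I := inv hip hD hE hS hfD hon hval hbd htp hsb.
exists (ee ip E lam d f); split => //.
- by move=> i; have [_ _ [b hb]] := hn i; exists i.+2, b.
2: by move=> i; case: (hn i).
move=> x; split.
  move=> hx eps e0; have [y [[n [c ->]] hy]] := hx eps e0.
  exists (\sum_(i < n) c i *: ee ip E lam d f i); split => //.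
  have H : forall i, (i < n)%N -> exists b : nat -> R[i],
      ee ip E lam d f i = \sum_(j < n.+1) b j *: f j.
    move=> i hi; have [_ _ hb] := hn i; exact: span_widen hb.
  by have [b hb] := span_comb H c; exists n.+1, b.
move=> hx eps e0.
have e20 : 0 < eps / 2 by rewrite divr_gt0.
have [y [[N [c hy]] hxy]] := hx (eps / 2) e20.
set K : R := 1 + \sum_(i < N) complex.Re `|c i|.
have hK : \sum_(i < N) `|c i| < (K%:C)%C.
  have hsum : (((\sum_(i < N) complex.Re `|c i|)%:C)%C : R[i]) = \sum_(i < N) `|c i|.
    by rewrite rmorph_sum; apply: eq_bigr => i _; apply: RRe_real; exact: normr_real.
  have eK : ((K%:C)%C : R[i]) = 1 + \sum_(i < N) `|c i|.
    by rewrite -hsum /K rmorphD rmorph1.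
  by rewrite eK ltrDr ltr01.
have K0 : 0 < K.
  by rewrite -ltcR; apply: le_lt_trans hK; apply: sumr_ge0 => i _.
set be := eps / 2 / K.
have be0 : 0 < be by rewrite divr_gt0.
have [M hM] := hev (be ^+ 2 * tt lam d N) (mulr_gt0 (exprn_gt0 _ be0) (htp N)).
set n := maxn N M.+1.
have Nn : (N <= n)%N by rewrite leq_maxl.
have Mn : (M <= n.-1)%N by rewrite /n; lia.
have [[_ gg _ _ _] hf] := I n.
have H : forall k, (k < N)%N -> exists (a : nat -> R[i]) (ga : R[i]),
    f k = \sum_(j < n) a j *: ee ip E lam d f j + ga *: GG ip E lam d f n /\
    `|ga| <= (be%:C)%C.
  move=> k kN.
  have [a [ga [r [hfk [hg [hr hrt]]]]]] := hf k (leq_trans (ltnW kN) Nn).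
  exists a, ga; split => //.
  have tk : tt lam d N <= tt lam d k.-1 by apply: htm; apply: leq_trans (leq_pred k) (ltnW kN).
  have rb : r < be ^+ 2.
    rewrite -(ltr_pM2r (htp k.-1)); apply: (le_lt_trans hrt).
    apply: (lt_le_trans (hM _ Mn)); apply: ler_wpM2l => //; exact: sqr_ge0.
  apply: ltW; rewrite -(ltr_pXn2r (n:=2)) // ?nnegrE ?normr_ge0 ?lecR ?ltW //.
  by rewrite normCK hg -rmorphXn ltcR.
have [a [Ga [hsum hGa]]] := comb H c.
exists (\sum_(j < n) a j *: ee ip E lam d f j); split; first by exists n, a.
have -> : x - \sum_(j < n) a j *: ee ip E lam d f j = (x - y) + Ga *: GG ip E lam d f n.
  by rewrite hy hsum opprD addrA subrK.
rewrite [eps](splitr eps); apply: tri => //.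
have hG : `|Ga| < ((eps / 2)%:C)%C.
  apply: (le_lt_trans hGa).
  have -> : ((eps / 2)%:C)%C = (K%:C)%C * (be%:C)%C 
    by rewrite -rmorphM /=; congr ((_ %:C)%C); rewrite /be; field; rewrite gt_eqF.
  by rewrite ltr_pM2r // ltcR.
rewrite -normCK; rewrite ltr_pXn2r // ?nnegrE ?normr_ge0 ?lecR ?ltW //.
Qed.
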